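(* Let $p$ be a prime and $B\subset\mathrm{GL}_2(\mathbb{F}_p)$ the subgroup of upper triangular matrices. Let $H\subset B$ be a subgroup of order divisible by $p$ of the form $H=D\cdot U$, where $D\subset B$ is a subgroup of diagonal matrices and $U$ is the cyclic group generated by $\begin{pmatrix}1&1\\0&1\end{pmatrix}$ (which is normal in $H$). Let $\pi:H\to H/U\simeq D$ be the quotient map. Let $\phi$ be an automorphism of $H$ such that $\pi(x)=\pi(\phi(x))$ for all $x\in H$. Then $\phi$ is given by conjugation in $B$: there is $A\in B$ such that $\phi(x)=AxA^{-1}$ for all $x\in H$. *)

(* Defs.v *)
From HB Require Import structures.
From mathcomp Require Import all_boot all_order all_algebra all_fingroup all_solvable.
Set Implicit Arguments. Unset Strict Implicit. Unset Printing Implicit Defensive.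
Import GRing.Theory.

(* Group GL_2(F_p) is {'GL_2('F_p)}; matrix indices 0 = ord0, 1 = ord_max. *)

Local Open Scope group_scope.

Definition Borel (p : nat) : {set {'GL_2(p)}} :=
  [set g : {'GL_2(p)} | GLval g ord_max ord0 == 0%R].

Definition diagGL (p : nat) : {set {'GL_2(p)}} :=
  [set g : {'GL_2(p)} | (GLval g ord_max ord0 == 0%R) && (GLval g ord0 ord_max == 0%R)].

Definition umx (p : nat) : 'M['F_p]_2 :=
  \matrix_(i < 2, j < 2) (if (i == ord_max) && (j == ord0) then 0%R else 1%R).

Lemma umx_unit (p : nat) : umx p \in unitmx.
Proof.
rewrite unitmxE (expand_det_col _ ord0) !big_ord_recl big_ord0 /cofactor.
rewrite !det_mx11 /umx !mxE /=.
by rewrite mul0r !addr0 mul1r expr0 mulr1 unitr1.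
Qed.

Definition uGL (p : nat) : {'GL_2(p)} := FinRing.unit _ (umx_unit p).

Definition Ugrp (p : nat) : {group {'GL_2(p)}} := <[uGL p]>%G.

(* Main.v *)
Require Import Defs.
From HB Require Import structures.
From mathcomp Require Import all_boot all_order all_algebra all_fingroup all_solvable all_field.
From mathcomp Require Import ring.
Set Implicit Arguments. Unset Strict Implicit. Unset Printing Implicit Defensive.
Import GRing.Theory.
Local Open Scope ring_scope.
Local Open Scope group_scope.

Lemma ord2 (i : 'I_2) : i = ord0 \/ i = ord_max.
Proof. by case: i => [[|[|//]] Hi]; [left|right]; apply/val_inj. Qed.

Lemma mulmx2 (R : pzRingType) (M N : 'M[R]_2) i j :
  (M *m N) i j = (M i ord0 * N ord0 j + M i ord_max * N ord_max j)%R.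
Proof. rewrite mxE !big_ord_recl big_ord0 addr0 /=. congr (_ + _ * _)%R; by rewrite (_ : lift ord0 ord0 = ord_max) //; exact: val_inj. Qed.

Section S.
Variable p : nat.
Hypothesis p_pr : prime p.

Lemma GL_eq (g h : {'GL_2(p)}) :
  GLval g ord0 ord0 = GLval h ord0 ord0 -> GLval g ord0 ord_max = GLval h ord0 ord_max ->
  GLval g ord_max ord0 = GLval h ord_max ord0 -> GLval g ord_max ord_max = GLval h ord_max ord_max ->
  g = h.
Proof.
move=> e1 e2 e3 e4; apply/val_inj/matrixP => i j.
by case: (ord2 i) => ->; case: (ord2 j) => ->.
Qed.

Lemma upowE i :
  [/\ GLval (uGL p ^+ i) ord0 ord0 = 1%R, GLval (uGL p ^+ i) ord0 ord_max = i%:R,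
      GLval (uGL p ^+ i) ord_max ord0 = 0%R & GLval (uGL p ^+ i) ord_max ord_max = 1%R].
Proof.
elim: i => [|i [e1 e2 e3 e4]]; first by rewrite expg0 GL_1E !mxE.
rewrite expgSr GL_MxE !mulmx2 e1 e2 e3 e4 /= /umx !mxE /=.
split; ring.
Qed.

Lemma natr_Fp (c : 'F_p) : (nat_of_ord c)%:R = c.
Proof. exact: natr_Zp. Qed.

Lemma memU v : reflect [/\ GLval v ord0 ord0 = 1%R, GLval v ord_max ord0 = 0%R & GLval v ord_max ord_max = 1%R] (v \in Ugrp p).
Proof.
apply: (iffP idP).
  by case/cycleP => i ->; case: (upowE i).
case=> e1 e3 e4; apply/cycleP; exists (nat_of_ord (GLval v ord0 ord_max)).
case: (upowE (GLval v ord0 ord_max)) => f1 f2 f3 f4.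
by apply: GL_eq; rewrite ?f1 ?f2 ?f3 ?f4 ?natr_Fp.
Qed.


Lemma scal_pow (g : {'GL_2(p)}) a m n :
  GLval g ord0 ord0 = a -> GLval g ord_max ord_max = a -> GLval g ord_max ord0 = 0%R ->
  GLval g ord0 ord_max = m ->
  [/\ GLval (g ^+ n.+1) ord0 ord0 = (a ^+ n.+1)%R, GLval (g ^+ n.+1) ord0 ord_max = (n.+1%:R * a ^+ n * m)%R,
      GLval (g ^+ n.+1) ord_max ord0 = 0%R & GLval (g ^+ n.+1) ord_max ord_max = (a ^+ n.+1)%R].
Proof.
move=> e1 e4 e3 e2.
elim: n => [|n [f1 f2 f3 f4]]; first by rewrite expg1 e1 e2 e3 e4 expr1 expr0; split=> //; ring.
rewrite expgSr GL_MxE !mulmx2 f1 f2 f3 f4 e1 e2 e3 e4 !exprS.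
split; ring.
Qed.

Lemma FpE (a : 'F_p) : (a ^+ p)%R = a.
Proof. by have := expf_card a; rewrite card_Fp. Qed.

End S.

Theorem proposition3p4 (p : nat) (p_pr : prime p)
  (D H : {group {'GL_2(p)}})
  (hD : D \subset diagGL p)
  (hH : H :=: D * Ugrp p)
  (hdiv : (p %| #|H|)%N)
  (phi : {perm {'GL_2(p)}})
  (hphi : phi \in Aut H)
  (hpi : forall x, x \in H -> coset (Ugrp p) x = coset (Ugrp p) (phi x)) :
  exists2 A : {'GL_2(p)}, A \in Borel p & forall x, x \in H -> phi x = A * x * A^-1.
Proof.
have Hmor : {in H &, {morph phi : x y / x * y}} := morphicP (Aut_morphic hphi).
have Hcl : forall x, x \in H -> phi x \in H by move=> x; apply: Aut_closed.
have uU : uGL p \in Ugrp p by apply: cycle_id.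
have DH : forall d, d \in D -> d \in H.
  by move=> d Dd; rewrite hH; apply/mulsgP; exists d 1 => //; rewrite ?group1 ?mulg1.
have UH : forall v, v \in Ugrp p -> v \in H.
  by move=> v Uv; rewrite hH; apply/mulsgP; exists 1 v => //; rewrite ?group1 ?mul1g.
have Ddiag : forall d, d \in D -> GLval d ord_max ord0 = 0%R /\ GLval d ord0 ord_max = 0%R.
  by move=> d /(subsetP hD); rewrite inE => /andP[/eqP -> /eqP ->].
have NU : H \subset 'N(Ugrp p).
  rewrite hH mul_subG ?normG //; apply/subsetP => d Dd.
  rewrite inE /Ugrp /= -cycleJ cycle_subG.
  have [d1 d2] := Ddiag d Dd.
  have d0 : GLval d ord0 ord0 != 0%R.
    apply: contraTneq (GL_det d) => e.
    rewrite (expand_det_col _ ord0) !big_ord_recl big_ord0 e.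
    by rewrite (_ : lift ord0 ord0 = ord_max) ?d1 ?mul0r ?addr0 ?eqxx //; apply: val_inj.
  have [k [f1 f2 f3 f4]] : exists k : nat,
    [/\ GLval (uGL p ^+ k) ord0 ord0 = 1%R,
         GLval (uGL p ^+ k) ord0 ord_max = (GLval d ord_max ord_max / GLval d ord0 ord0)%R,
         GLval (uGL p ^+ k) ord_max ord0 = 0%R & GLval (uGL p ^+ k) ord_max ord_max = 1%R].
    exists (nat_of_ord (GLval d ord_max ord_max / GLval d ord0 ord0)%R).
    by have := upowE p (nat_of_ord (GLval d ord_max ord_max / GLval d ord0 ord0)%R); rewrite natr_Fp.
  suff e : uGL p ^ d = uGL p ^+ k by rewrite e groupX.
  apply: (mulgI d); rewrite /conjg !mulgA mulgV mul1g.
  apply: GL_eq; rewrite !GL_MxE !mulmx2 /umx !mxE /= ?f1 ?f2 ?f3 ?f4 ?d1 ?d2.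
  - by ring.
  - by rewrite [(GLval d ord0 ord0 * _)%R]mulrC divfK //; ring.
  - by ring.
  - by ring.
have rc : forall x, x \in H -> exists2 h, h \in Ugrp p & phi x = h * x.
  move=> x Hx; apply/rcosetP.
  have := hpi x Hx; move/(congr1 (fun c : coset_of (Ugrp p) => (c : {set {'GL_2(p)}}))).
  rewrite !val_coset ?(subsetP NU) ?Hcl // => ->; exact: rcoset_refl.
have phi1 : phi 1 = 1.
  by apply: (mulgI (phi 1)); rewrite -Hmor ?group1 ?mulg1.
have [h0 Uh0 phu] := rc _ (UH _ uU).
have Uphu : phi (uGL p) \in Ugrp p by rewrite phu groupM.
have [u1 u3 u4] := memU _ Uphu.
set k := GLval (phi (uGL p)) ord0 ord_max.
have kn0 : k != 0%R.
  apply/eqP => k0.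
  have : phi (uGL p) = phi 1 by rewrite phi1; apply: GL_eq; rewrite ?GL_1E ?mxE.
  move/perm_inj/(congr1 (fun g : {'GL_2(p)} => GLval g ord0 ord_max)).
  by rewrite GL_1E /umx !mxE /=; move/eqP; rewrite oner_eq0.
have phD : forall d, d \in D -> [/\ GLval (phi d) ord0 ord0 = GLval d ord0 ord0,
    GLval (phi d) ord_max ord0 = 0%R & GLval (phi d) ord_max ord_max = GLval d ord_max ord_max].
  move=> d Dd; have [h Uh ->] := rc d (DH d Dd); have [h1 h3 h4] := memU _ Uh.
  have [d1 d2] := Ddiag d Dd.
  by rewrite !GL_MxE !mulmx2 h1 h3 h4 d1 d2; split; ring.
set mu := fun d => GLval (phi d) ord0 ord_max.
have hcomm : forall d1 d2, d1 \in D -> d2 \in D ->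
    (GLval d1 ord0 ord0 * mu d2 + mu d1 * GLval d2 ord_max ord_max =
     GLval d2 ord0 ord0 * mu d1 + mu d2 * GLval d1 ord_max ord_max)%R.
  move=> d1 d2 D1 D2.
  have [a1 a2] := Ddiag d1 D1; have [b1 b2] := Ddiag d2 D2.
  have [p1 p3 p4] := phD d1 D1; have [q1 q3 q4] := phD d2 D2.
  have c : d1 * d2 = d2 * d1.
    by apply: GL_eq; rewrite !GL_MxE !mulmx2 ?a1 ?a2 ?b1 ?b2; ring.
  move: (congr1 phi c); rewrite !Hmor ?DH //.
  move/(congr1 (fun g : {'GL_2(p)} => GLval g ord0 ord_max)).
  by rewrite !GL_MxE !mulmx2 ?p1 ?p3 ?q1 ?q3 ?p4 ?q4 /mu => ->.
have phX : forall x n, x \in H -> phi (x ^+ n) = phi x ^+ n.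
  move=> x n Hx; elim: n => [|n IH]; first by rewrite !expg0 phi1.
  by rewrite !expgSr Hmor ?groupX // IH.
have [s hs] : exists s, forall d, d \in D ->
    mu d = (s * (GLval d ord_max ord_max - GLval d ord0 ord0))%R.
  case: (pickP [pred d | (d \in D) && (GLval d ord0 ord0 != GLval d ord_max ord_max)]) =>
    [d0 /andP[Dd0 ne] | none].
    exists (mu d0 / (GLval d0 ord_max ord_max - GLval d0 ord0 ord0))%R => d Dd.
    have nz : (GLval d0 ord_max ord_max - GLval d0 ord0 ord0 != 0)%R.
      by rewrite subr_eq0 eq_sym.
    apply: (mulIf nz); rewrite mulrAC divfK //.
    have E := hcomm d0 d Dd0 Dd.
    set a0 := GLval d0 ord0 ord0 in E *; set b0 := GLval d0 ord_max ord_max in E nz *.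
    set a := GLval d ord0 ord0 in E *; set b := GLval d ord_max ord_max in E *.
    have E' : (mu d * (b0 - a0) - mu d0 * (b - a) =
               - ((a0 * mu d + mu d0 * b) - (a * mu d0 + mu d * b0)))%R by ring.
    by apply/eqP; rewrite -subr_eq0 E' E subrr oppr0.
  exists 0%R => d Dd; rewrite mul0r.
  have eqd : GLval d ord0 ord0 = GLval d ord_max ord_max.
    by move: (none d) => /=; rewrite Dd /= => /negbFE/eqP.
  have [n pn] : exists n, p = n.+1 by exists p.-1; rewrite prednK // prime_gt0.
  have Fa : forall a : 'F_p, (a ^+ n.+1)%R = a by move=> a; rewrite -pn FpE.
  have F0 : (n.+1%:R : 'F_p) = 0%R by rewrite -pn pchar_Fp_0.
  have [d1 d2] := Ddiag d Dd.
  have dp : d ^+ n.+1 = d.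
    have [f1 f2 f3 f4] := scal_pow n (erefl (GLval d ord0 ord0)) (esym eqd) d1 d2.
    by apply: GL_eq; rewrite ?f1 ?f2 ?f3 ?f4 ?Fa ?mulr0 // -eqd.
  have [p1 p3 p4] := phD d Dd.
  have [f1 f2 f3 f4] := scal_pow n p1 (etrans p4 (esym eqd)) p3 (erefl (mu d)).
  rewrite /mu -dp phX ?DH // f2 F0 !mul0r //.
pose Am : 'M['F_p]_2 := \matrix_(i < 2, j < 2)
  (if i == ord0 then (if j == ord0 then k else s) else (if j == ord0 then 0 else 1))%R.
have AU : Am \in unitmx.
  rewrite unitmxE (expand_det_col _ ord0) !big_ord_recl big_ord0 /cofactor.
  rewrite !det_mx11 /Am !mxE /=.
  by rewrite mul0r !addr0 expr0 !mul1r mulr1 unitfE.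
pose A : {'GL_2(p)} := FinRing.unit _ AU.
have AE : GLval A = Am by [].
have [a1 a2 a3 a4] : [/\ GLval A ord0 ord0 = k, GLval A ord0 ord_max = s,
   GLval A ord_max ord0 = 0%R & GLval A ord_max ord_max = 1%R] by rewrite AE !mxE.
exists A; first by rewrite inE a3.
have Q : forall x, x \in H -> phi x * A = A * x -> phi x = A * x * A^-1.
  by move=> x _ e; rewrite -e mulgK.
have QD : forall d, d \in D -> phi d * A = A * d.
  move=> d Dd; have [d1 d2] := Ddiag d Dd; have [p1 p3 p4] := phD d Dd.
  have := hs d Dd; rewrite /mu => m.
  by apply: GL_eq; rewrite !GL_MxE !mulmx2 ?p1 ?p3 ?p4 ?m ?a1 ?a2 ?a3 ?a4 ?d1 ?d2; ring.
have QU : phi (uGL p) * A = A * uGL p.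
  apply: GL_eq; rewrite !GL_MxE !mulmx2 ?u1 ?u3 ?u4 ?a1 ?a2 ?a3 ?a4 /umx !mxE /=; rewrite -/k; ring.
have QM : forall x y, x \in H -> y \in H -> phi x * A = A * x -> phi y * A = A * y ->
    phi (x * y) * A = A * (x * y).
  by move=> x y Hx Hy ex ey; rewrite Hmor // -mulgA ey mulgA ex mulgA.
move=> x Hx; apply: Q => //; move: Hx; rewrite hH => /mulsgP[d v Dd /cycleP[i ->] ->].
elim: i => [|i IH]; first by rewrite expg0 mulg1; exact: QD.
rewrite expgSr mulgA; apply: QM => //; [apply: groupM; [exact: DH | apply: groupX; exact: UH] | exact: UH].
Qed.
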